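(* Let $A$ be an essential arrangement of affine hyperplanes in a real affine space $V$, $f_0$ a non-constant affine-linear function, and for large $t$ let $A_t=A\cup\{\{f_0=t\}\}$. Let $H=\{f=0\}$ belong to $A$, let $\alpha\in\mathbb C$, let $\Delta$ be a growing domain of $A$, $\Delta_t=\Delta\cap\{f_0<t\}$ the corresponding bounded domain of $A_t$, and $g$ a branch of $f^\alpha$ on $\Delta$. Then $|f|$ is bounded on $\Delta$ if and only if $tr(\Delta)\subset tr(H)$, and this condition is equivalent to $h$ vanishing on $tr(\Delta)$, where $h=f^0/f_0^0$. Moreover, if $|f|$ is bounded on $\Delta$, then for every sufficiently large $t$, $c(g,\Delta_t)=c(g,\Delta,f_0)$.
   Context: Domains and faces are as usual, and a domain is growing if it is unbounded and $f_0\to+\infty$ at infinity within it. In the projective completion $\bar V=V\cup H_\infty$, $tr(H)=\bar H\cap H_\infty$, and $tr(\Delta)$ is the face of highest dimension among faces of $\bar A$ lying in $H_\infty$ contained in $\bar\Delta\cap H_\infty$. $h([v])=f^0(v)/f_0^0(v)$ is defined on $H_\infty\setminus\overline{\{f_0=0\}}$, where $f^0$ is the linear part. The external support of a face $D$ on which $|f|$ is bounded is the face of highest dimension in the set of points of $\bar D$ where $|f|$ is maximal. $c(g,\Delta_t)$ is the value of $g$ on the external support of $\Delta_t$ (in $A_t$) with respect to $f$, and when $|f|$ is bounded on $\Delta$, $c(g,\Delta,f_0)$ is the value of $g$ on the external support of $\Delta$ (in $A$) with respect to $f$. *)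

(* Defs.v *)
From HB Require Import structures.
From mathcomp Require Import all_boot all_order all_algebra.
From mathcomp Require Import all_classical all_reals all_analysis.
From mathcomp Require Import complex.
Set Implicit Arguments. Unset Strict Implicit. Unset Printing Implicit Defensive.
Import Order.TTheory GRing.Theory Num.Theory.
Import numFieldNormedType.Exports.
Local Open Scope classical_set_scope.
Local Open Scope ring_scope.

Section Arrangements.
Variables (R : realType) (n : nat).
Local Notation V := 'rV[R]_n.

(* An affine-linear function x |-> <a, x> + b on V = R^n, stored as (a, b). *)
Definition aff := (V * R)%type.

Definition lin_eval (f : aff) (v : V) : R := \sum_(i < n) f.1 0 i * v 0 i.
Definition aff_eval (f : aff) (x : V) : R := lin_eval f x + f.2.

Definition nonconstant (f : aff) : bool := f.1 != 0.

Definition zeroset (f : aff) : set V := [set x | aff_eval f x = 0].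

(* An arrangement: a finite list of nonconstant affine functions, representing
   the hyperplanes {f = 0}. *)
Definition arrangement (A : seq aff) : Prop := all nonconstant A.

Definition essential (A : seq aff) : Prop := span (map fst A) = fullv.

Definition hyperplane_of (A : seq aff) (f : aff) : Prop :=
  nonconstant f /\ exists h, h \in A /\ zeroset f = zeroset h.

Definition arr_t (A : seq aff) (f0 : aff) (t : R) : seq aff :=
  rcons A (f0.1, f0.2 - t).

Definition arr_compl (A : seq aff) : set V :=
  [set x | forall h, h \in A -> aff_eval h x != 0].

Definition is_domain (A : seq aff) (D : set V) : Prop :=
  exists2 x, arr_compl A x & D = connected_component (arr_compl A) x.

Definition growing (f0 : aff) (D : set V) : Prop :=
  (forall r : R, exists2 x, D x & r < `|x|) /\
  (forall M : R, exists r : R, forall x, D x -> r <= `|x| -> M <= aff_eval f0 x).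

Definition signvec (A : seq aff) (x : V) : seq R :=
  map (fun h => Num.sg (aff_eval h x)) A.

Definition face (A : seq aff) (F : set V) : Prop :=
  exists x, F = [set y | signvec A y = signvec A x].

Definition ldim (S : set V) : nat :=
  \max_(k < n.+1 | `[< exists s : seq V,
        [/\ size s = k, (forall v, v \in s -> S v) & free s] >]) k.

Definition adim (S : set V) : nat :=
  ldim [set v | exists x y, [/\ S x, S y & v = x - y]].

(* A point of H_oo = P(V) is represented by any nonzero vector v (the point
   [v : 0] in homogeneous coordinates); subsets of H_oo are represented by
   sets of nonzero vectors stable under nonzero scaling. *)

(* \bar D n H_oo : the points [v:0] that are limits in the projective
   completion of points [x_k : 1] with x_k in D, i.e. c_k (x_k, 1) -> (v, 0)
   for some scalars c_k. *)
Definition inf_closure (D : set V) : set V :=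
  [set v : V | v != 0 /\ exists (x : nat -> V) (c : nat -> R),
     [/\ forall k, D (x k), c @ \oo --> (0 : R) &
         (fun k => c k *: x k) @ \oo --> (v : V)]].

Definition trH (f : aff) : set V := inf_closure (zeroset f).

Definition lsignvec (A : seq aff) (v : V) : seq R :=
  map (fun h => Num.sg (lin_eval h v)) A.

(* faces of \bar A lying in H_oo (cells of the induced projective
   arrangement {tr(H) : H in A} of H_oo; signs are defined up to a global
   sign in projective space). *)
Definition face_inf (A : seq aff) (F : set V) : Prop :=
  exists2 v, v != 0 &
    F = [set w | w != 0 /\ (lsignvec A w = lsignvec A v \/
                           lsignvec A w = lsignvec A (- v))].

Definition pdim (F : set V) : nat := (ldim F).-1.

Definition is_tr (A : seq aff) (D : set V) (F : set V) : Prop :=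
  [/\ face_inf A F, F `<=` inf_closure D &
      forall F', face_inf A F' -> F' `<=` inf_closure D -> (pdim F' <= pdim F)%N].

(* h([v]) = f^0(v) / f0^0(v), defined on H_oo minus the closure of {f0 = 0} *)
Definition hfun (f f0 : aff) (v : V) : R := lin_eval f v / lin_eval f0 v.

Definition h_vanishes_on (f f0 : aff) (F : set V) : Prop :=
  forall v, F v -> ~ trH f0 v /\ hfun f f0 v = 0.

Local Open Scope complex_scope.
Definition cexp (z : R[i]) : R[i] :=
  (expR (complex.Re z) * cos (complex.Im z)) +i* (expR (complex.Re z) * sin (complex.Im z)).

Definition branch (f : aff) (alpha : R[i]) (D : set V) (g : V -> R[i]) : Prop :=
  exists L : V -> R[i],
    [/\ {within D, continuous (fun x => complex.Re (L x))},
        {within D, continuous (fun x => complex.Im (L x))},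
        forall x, D x -> cexp (L x) = (aff_eval f x)%:C &
        forall x, D x -> g x = cexp (alpha * L x)].
Local Close Scope complex_scope.

Definition maxset (f : aff) (D : set V) : set V :=
  [set x | closure D x /\ forall y, closure D y -> `|aff_eval f y| <= `|aff_eval f x|].

Definition ext_supp (A : seq aff) (f : aff) (D : set V) (F : set V) : Prop :=
  [/\ face A F, F `<=` maxset f D &
      forall F', face A F' -> F' `<=` maxset f D -> (adim F' <= adim F)%N].

Definition ext_value (A : seq aff) (f : aff) (g : V -> R[i]) (D : set V) (c : R[i])
  : Prop :=
  (exists F, ext_supp A f D F) /\
  forall F, ext_supp A f D F -> forall p, F p ->
    ((fun x => complex.Re (g x)) @ within D (nbhs p) --> complex.Re c) /\
    ((fun x => complex.Im (g x)) @ within D (nbhs p) --> complex.Im c).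

Definition f_bounded_on (f : aff) (D : set V) : Prop :=
  exists M : R, forall x, D x -> `|aff_eval f x| <= M.

End Arrangements.

(* Main.v *)
Require Import Defs.
From HB Require Import structures.
From mathcomp Require Import all_boot all_order all_algebra.
From mathcomp Require Import all_classical all_reals all_analysis.
From mathcomp Require Import complex.
From mathcomp Require Import zify lra ring.
Import Order.TTheory GRing.Theory Num.Theory.
Import numFieldNormedType.Exports.
Local Open Scope classical_set_scope.
Local Open Scope ring_scope.

Set Implicit Arguments. Unset Strict Implicit. Unset Printing Implicit Defensive.


Section Basics.
Variables (R : realType) (n : nat).
Local Notation V := 'rV[R]_n.
Implicit Types (f h : aff R n) (u v x y : V).

Lemma lin_evalD f u v : lin_eval f (u + v) = lin_eval f u + lin_eval f v.
Proof. rewrite /lin_eval -big_split /=; apply: eq_bigr => i _; by rewrite mxE mulrDr. Qed.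

Lemma lin_evalZ f a u : lin_eval f (a *: u) = a * lin_eval f u.
Proof. rewrite /lin_eval mulr_sumr; apply: eq_bigr => i _; by rewrite mxE mulrCA. Qed.

Lemma lin_evalN f u : lin_eval f (- u) = - lin_eval f u.
Proof. by rewrite -scaleN1r lin_evalZ mulN1r. Qed.

Lemma lin_evalB f u v : lin_eval f (u - v) = lin_eval f u - lin_eval f v.
Proof. by rewrite lin_evalD lin_evalN. Qed.

Lemma lin_eval0 f : lin_eval f 0 = 0.
Proof. by rewrite -(scale0r (0 : V)) lin_evalZ mul0r. Qed.

Lemma lin_eval_sum f (I : Type) (r : seq I) (P : pred I) (F : I -> V) :
  lin_eval f (\sum_(i <- r | P i) F i) = \sum_(i <- r | P i) lin_eval f (F i).
Proof.
by apply: (big_morph (lin_eval f)); [exact: lin_evalD | exact: lin_eval0].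
Qed.

Lemma aff_evalD f x v : aff_eval f (x + v) = aff_eval f x + lin_eval f v.
Proof. by rewrite /aff_eval lin_evalD addrAC. Qed.

Lemma aff_evalB f x y : aff_eval f x - aff_eval f y = lin_eval f (x - y).
Proof. by rewrite /aff_eval lin_evalB opprD addrACA subrr addr0. Qed.

Lemma coord_le (z : V) i : `|z 0 i| <= `|z|.
Proof.
have -> : `|z| = mx_norm z by [].
rewrite mx_normrE.
exact: (le_bigmax _ (fun ij : 'I_1 * 'I_n => `|z ij.1 ij.2|) (0, i)).
Qed.

Definition lipk f : R := \sum_i `|f.1 0 i|.

Lemma lipk_ge0 f : 0 <= lipk f.
Proof. by apply: sumr_ge0 => i _. Qed.

Lemma lin_eval_lip f z : `|lin_eval f z| <= lipk f * `|z|.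
Proof.
rewrite /lin_eval /lipk mulr_suml.
apply: (le_trans (ler_norm_sum _ _ _)); apply: ler_sum => i _.
by rewrite normrM ler_wpM2l // coord_le.
Qed.

Lemma lip_cont (phi : V -> R) (k : R) : 0 <= k ->
  (forall x y, `|phi x - phi y| <= k * `|x - y|) -> continuous phi.
Proof.
move=> k0 H x; apply/(@cvgrPdist_lt _ _ _ (nbhs x) (nbhs_filter x)) => e e0.
have d0 : 0 < e / (k + 1) by rewrite divr_gt0 // ltr_wpDl.
near=> y.
have Hy : `|x - y| < e / (k + 1).
  near: y; exact: (@cvgr_dist_lt _ V _ (nbhs x) (nbhs_filter x) id x cvg_id _ d0).
apply: (le_lt_trans (H x y)).
apply: (le_lt_trans (y := (k + 1) * `|x - y|)).
  by rewrite ler_wpM2r // lerDl.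
by rewrite mulrC -ltr_pdivlMr // ltr_wpDl.
Unshelve. all: by end_near.
Qed.

Lemma lin_eval_cont f : continuous (lin_eval f).
Proof.
apply: (lip_cont (lipk_ge0 f)) => x y; rewrite -lin_evalB; exact: lin_eval_lip.
Qed.

Lemma aff_eval_cont f : continuous (aff_eval f).
Proof.
apply: (lip_cont (lipk_ge0 f)) => x y; rewrite aff_evalB; exact: lin_eval_lip.
Qed.

End Basics.


Lemma conn_ivt (T : topologicalType) (R : realType) (D : set T) (phi : T -> R) a b z :
  connected D -> {within D, continuous phi} -> D a -> D b ->
  phi a <= z <= phi b -> exists2 w, D w & phi w = z.
Proof.
move=> cD cphi Da Db hz.
have /connected_intervalP hI := connected_continuous_connected cD cphi.
have := hI (phi a) (phi b) (ex_intro2 _ _ a Da erefl) (ex_intro2 _ _ b Db erefl) z hz.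
by case=> w Dw <-; exists w.
Qed.

Lemma conn_sign (T : topologicalType) (R : realType) (D : set T) (phi : T -> R) a :
  connected D -> {within D, continuous phi} -> D a ->
  (forall x, D x -> phi x != 0) ->
  forall x, D x -> 0 < Num.sg (phi a) * phi x.
Proof.
move=> cD cphi Da nz x Dx.
have na := nz a Da; have nx := nz x Dx.
rewrite lt_neqAle eq_sym mulf_neq0 ?sgr_eq0 //=.
case: (ltrgtP (phi a) 0) => ha; last by move: na; rewrite ha eqxx.
- rewrite ltr0_sg // mulN1r oppr_ge0 leNgt; apply/negP => hx.
  have [w Dw hw] := conn_ivt (z := 0) cD cphi Da Dx (ltac:(by rewrite !ltW)).
  by move: (nz w Dw); rewrite hw eqxx.
- rewrite gtr0_sg // mul1r leNgt; apply/negP => hx.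
  have [w Dw hw] := conn_ivt (z := 0) cD cphi Dx Da (ltac:(by rewrite !ltW)).
  by move: (nz w Dw); rewrite hw eqxx.
Qed.

Section Dom.
Variables (R : realType) (n : nat).
Local Notation V := 'rV[R]_n.
Variables (A : seq (aff R n)) (x0 : V) (Delta : set V).
Hypothesis Hx0 : arr_compl A x0.
Hypothesis HD : Delta = connected_component (arr_compl A) x0.

Definition sgA (h : aff R n) : R := Num.sg (aff_eval h x0).
Definition Sset := [set x : V | forall h, h \in A -> 0 < sgA h * aff_eval h x].
Definition Kset := [set x : V | forall h, h \in A -> 0 <= sgA h * aff_eval h x].
Definition Cset := [set v : V | forall h, h \in A -> 0 <= sgA h * lin_eval h v].

Lemma x0D : Delta x0.
Proof. by rewrite HD; apply: connected_component_refl. Qed.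

Lemma D_compl : Delta `<=` arr_compl A.
Proof. by rewrite HD; apply: connected_component_sub. Qed.

Lemma D_conn : connected Delta.
Proof. by rewrite HD; apply: component_connected. Qed.

Lemma sig_neq0 h : h \in A -> sgA h != 0.
Proof. by move=> hA; rewrite /sgA sgr_eq0; apply: Hx0. Qed.

Lemma sig_x0 h : h \in A -> 0 < sgA h * aff_eval h x0.
Proof.
move=> hA; rewrite /sgA -normrEsg normr_gt0; exact: Hx0.
Qed.

Lemma sig_sq h : h \in A -> sgA h * sgA h = 1.
Proof.
move=> hA; rewrite /sgA -expr2 sqr_sg.
by move: (Hx0 hA) => ->.
Qed.

Lemma D_sign (phi : V -> R) : continuous phi -> (forall x, Delta x -> phi x != 0) ->
  forall x, Delta x -> 0 < Num.sg (phi x0) * phi x.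
Proof.
move=> cphi nz; apply: conn_sign => //.
- exact: D_conn.
- exact: continuous_subspaceT.
- exact: x0D.
Qed.

Lemma DS : Delta `<=` Sset.
Proof.
move=> x Dx h hA; apply: D_sign => //; first exact: aff_eval_cont.
by move=> y /D_compl; apply.
Qed.

Lemma aff_comb (h : aff R n) (x y : V) s :
  aff_eval h (x + s *: (y - x)) = (1 - s) * aff_eval h x + s * aff_eval h y.
Proof.
rewrite aff_evalD lin_evalZ -aff_evalB.
by rewrite mulrBr mulrBl mul1r addrA addrAC.
Qed.

Lemma seg_cont (x d : V) : continuous (fun s : R => x + s *: d).
Proof.
move=> s; apply: (@cvgD _ _ _ _ _ (fun=> x) (fun s => s *: d)).
  exact: cvg_cst.
exact: cvgZr_tmp.
Qed.

Lemma SD : Sset `<=` Delta.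
Proof.
move=> y Sy; rewrite HD.
pose B := [set x0 + s *: (y - x0) | s in `[(0:R), 1]].
have cB : connected B.
  apply: connected_continuous_connected; first exact: segment_connected.
  exact/continuous_subspaceT/seg_cont.
have BA : B `<=` arr_compl A.
  move=> _ [s /= hs <-] h hA.
  rewrite in_itv /= in hs; case/andP: hs => s0 s1.
  rewrite aff_comb.
  have : 0 < sgA h * ((1 - s) * aff_eval h x0 + s * aff_eval h y).
    rewrite mulrDr mulrCA [sgA h * (s * _)]mulrCA.
    have := sig_x0 hA; have := Sy h hA.
    case: (ltrgtP s 0) => [|sp|->]; first by rewrite ltNge s0.
      move=> p1 p2; rewrite ltr_wpDl //; first by rewrite mulr_ge0 // ?subr_ge0 // ltW.
      by rewrite mulr_gt0.
    by rewrite subr0 mul1r mul0r addr0.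
  by apply: contraTneq => ->; rewrite mulr0 ltxx.
apply: (connected_component_max (B := B)) => //.
- by exists 0; [rewrite set_itvcc /= lexx ler01 | rewrite scale0r addr0].
- by exists 1; [rewrite set_itvcc /= lexx ler01 | rewrite scale1r addrC subrK].
Qed.

Lemma contM (phi : V -> R) (c : R) : continuous phi -> continuous (fun x => c * phi x).
Proof. by move=> cp x; apply: (@cvgMl_tmp _ _ (nbhs x) (nbhs_filter x)); apply: cp. Qed.

Lemma closure_ge0 (phi : V -> R) : continuous phi ->
  (forall x, Delta x -> 0 < phi x) -> forall y, closure Delta y -> 0 <= phi y.
Proof.
move=> cp pos y cy; rewrite leNgt; apply/negP => hy.
have nb := @cvgr_lt _ _ (nbhs y) (nbhs_filter y) phi (phi y) (cp y) 0 hy.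
have [x [Dx hx]] := cy _ nb.
by move: (pos x Dx); rewrite ltNge (ltW hx).
Qed.

Lemma closure_K : closure Delta `<=` Kset.
Proof.
move=> y cy h hA; apply: (closure_ge0 (phi := fun x => sgA h * aff_eval h x)) => //.
  exact/contM/aff_eval_cont.
by move=> x /DS; apply.
Qed.

Lemma near_seg (y d : V) (B : set V) : nbhs y B ->
  exists2 e : R, 0 < e & forall s, 0 < s <= e -> B (y + s *: d).
Proof.
move=> nB.
move: (@seg_cont y d 0); rewrite /continuous_at scale0r addr0 => /(_ B nB).
move/nbhs_ballP => [e /= e0 He].
exists (e / 2); first by rewrite divr_gt0.
move=> s /andP [s0 se]; apply: He.
rewrite -ball_normE /= sub0r normrN gtr0_norm //.
apply: (le_lt_trans se); by rewrite ltr_pdivrMr // ltr_pMr // ltr1n.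
Qed.

Lemma K_closure y : Kset y -> forall B, nbhs y B -> exists x, Delta x /\ B x.
Proof.
move=> Ky B nB.
have [e e0 He] := near_seg (x0 - y) nB.
pose s := Num.min e 1.
have s0 : 0 < s by rewrite /s lt_min e0 ltr01.
have s1 : s <= 1 by rewrite /s ge_min lexx orbT.
exists (y + s *: (x0 - y)); split; last by apply: He; rewrite s0 /s ge_min lexx.
apply: SD => h hA; rewrite aff_comb mulrDr mulrCA [sgA h * (s * _)]mulrCA.
apply: ltr_wpDl; first by rewrite mulr_ge0 ?subr_ge0 // Ky.
by rewrite mulr_gt0 // sig_x0.
Qed.

Lemma K_closureP y (P : set V) : Kset y -> nbhs y P -> closure (Delta `&` P) y.
Proof.
move=> Ky nP B nB.
have [x [Dx [Bx Px]]] := K_closure Ky (filterI nB nP).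
by exists x.
Qed.

Lemma K_closure_sub y : Kset y -> closure Delta y.
Proof.
move=> Ky B nB; have [x [Dx Bx]] := K_closure Ky nB; by exists x.
Qed.

Lemma ray v k : Cset v -> 0 <= k -> Delta (x0 + k *: v).
Proof.
move=> Cv k0; apply: SD => h hA; rewrite aff_evalD lin_evalZ mulrDr mulrCA.
by apply: ltr_wpDr; [rewrite mulr_ge0 // Cv | rewrite sig_x0].
Qed.

Lemma inf_C v : inf_closure Delta v -> Cset v \/ Cset (- v).
Proof.
case=> vn0 [x [c [Dx c0 cv]]].
have lim h : h \in A ->
    (fun k => c k * (sgA h * aff_eval h (x k))) @ \oo --> sgA h * lin_eval h v.
  move=> hA.
  have -> : (fun k => c k * (sgA h * aff_eval h (x k))) =
      (fun k => sgA h * lin_eval h (c k *: x k) + c k * (sgA h * h.2)).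
    apply: funext => k; rewrite lin_evalZ /aff_eval.
    by rewrite mulrDr mulrDr mulrCA.
  rewrite -[X in _ --> X]addr0.
  apply: cvgD.
    apply: cvgMl_tmp; apply: (cvg_comp _ _ cv); exact: lin_eval_cont.
  rewrite -(mul0r (sgA h * h.2)); exact: cvgMr_tmp.
have pos k h : h \in A -> 0 < sgA h * aff_eval h (x k) by move=> hA; apply: DS.
case: (pselect (forall N, exists2 k, (N <= k)%N & 0 < c k)) => [Hf|Hnf].
- left => h hA; rewrite leNgt; apply/negP => hl.
  have [N _ HN] := cvgr_lt _ (lim h hA) 0 hl.
  have [k Nk ck] := Hf N.
  by move: (HN k Nk) => /=; rewrite ltNge mulr_ge0 // ?ltW // pos.
- right => h hA; rewrite lin_evalN mulrN oppr_ge0 leNgt; apply/negP => hl.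
  have [N1 HN1] : exists N, forall k, (N <= k)%N -> c k <= 0.
    apply: contrapT => HH; apply: Hnf => N.
    apply: contrapT => HH2; apply: HH; exists N => k Nk.
    by rewrite leNgt; apply/negP => ck; apply: HH2; exists k.
  have [N2 _ HN2] := cvgr_gt _ (lim h hA) 0 hl.
  have := HN2 (maxn N1 N2) (leq_maxr _ _); rewrite /= ltNge.
  by rewrite mulr_le0_ge0 // ?HN1 ?leq_maxl // ltW // pos.
Qed.

Lemma C_inf v : Cset v -> v != 0 -> inf_closure Delta v /\ inf_closure Delta (- v).
Proof.
move=> Cv vn0.
have Dx k : Delta (x0 + k.+1%:R *: v) by apply: ray.
have key (e : R) : e != 0 -> (fun k => (e * (k.+1%:R)^-1) *: (x0 + k.+1%:R *: v)) @ \oo --> e *: v.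
  move=> _.
  have -> : (fun k => (e * (k.+1%:R)^-1) *: (x0 + k.+1%:R *: v)) =
      (fun k => (e * harmonic k) *: x0 + e *: v).
    apply: funext => k; rewrite scalerDr scalerA -mulrA mulVf ?mulr1 ?pnatr_eq0 //.
  rewrite -[X in _ --> X]add0r; apply: cvgD; last exact: cvg_cst.
  rewrite -(scale0r x0); apply: cvgZr_tmp.
  rewrite -(mulr0 e); apply: cvgMl_tmp; exact: cvg_harmonic.
have cvh (e : R) : (fun k => e * (k.+1%:R)^-1) @ \oo --> 0.
  rewrite -(mulr0 e); apply: cvgMl_tmp; exact: cvg_harmonic.
split; split.
- exact: vn0.
- exists (fun k => x0 + k.+1%:R *: v), (fun k => 1 * (k.+1%:R)^-1); split => //.
  by rewrite -[X in _ --> X]scale1r; exact: (key 1 (oner_neq0 _)).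
- by rewrite oppr_eq0.
- exists (fun k => x0 + k.+1%:R *: v), (fun k => -1 * (k.+1%:R)^-1); split => //.
  rewrite -[X in _ --> X]scaleN1r; exact: (key (-1) (ltac:(by rewrite oppr_eq0 oner_eq0))).
Qed.

End Dom.


Lemma argmin_seq (R : realType) (T : eqType) (s : seq T) (r : T -> R) :
  s != [::] -> exists2 x, x \in s & forall y, y \in s -> r x <= r y.
Proof.
elim: s => // a s IH _.
case: (eqVneq s [::]) => [->|sn].
  by exists a; rewrite ?mem_seq1 // => y; rewrite mem_seq1 => /eqP ->.
have [b bs Hb] := IH sn.
case: (leP (r a) (r b)) => hab.
- exists a; first by rewrite mem_head.
  move=> y; rewrite in_cons => /orP [/eqP ->//|ys]; exact: le_trans hab (Hb y ys).
- exists b; first by rewrite in_cons bs orbT.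
  move=> y; rewrite in_cons => /orP [/eqP ->|ys]; [exact: ltW | exact: Hb].
Qed.

Lemma count_le_in (T : eqType) (a b : pred T) (s : seq T) :
  (forall x, x \in s -> a x -> b x) -> (count a s <= count b s)%N.
Proof.
elim: s => //= y s IH H.
have Hs : forall x, x \in s -> a x -> b x by move=> z zs; apply: H; rewrite in_cons zs orbT.
have := IH Hs; case ay: (a y); case by_: (b y) => //= h.
- by move: (H y (mem_head _ _) ay); rewrite by_.
- by rewrite add0n (leq_trans h) // leq_addl.
Qed.

Lemma count_lt (T : eqType) (a b : pred T) (s : seq T) :
  (forall x, x \in s -> a x -> b x) -> (exists2 x, x \in s & b x && ~~ a x) ->
  (count a s < count b s)%N.
Proof.
elim: s => [_ [x]//|y s IH H [x]].
have Hs : forall x, x \in s -> a x -> b x by move=> z zs; apply: H; rewrite in_cons zs orbT.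
have le_ab := count_le_in Hs.
rewrite in_cons => /orP [/eqP xy|xs] Hx /=.
- move: Hx; rewrite xy => /andP [by_ nay].
  by rewrite by_ (negbTE nay) add0n add1n ltnS.
- have lt := IH Hs (ex_intro2 _ _ x xs Hx).
  case ay: (a y); last by rewrite add0n; apply: (leq_trans lt); apply: leq_addl.
  by rewrite (H y (mem_head _ _) ay) !add1n ltnS.
Qed.

Section Walk.
Variables (R : realType) (n : nat).
Local Notation V := 'rV[R]_n.
Variables (A : seq (aff R n)) (x0 : V) (f : aff R n) (sf : R).
Hypothesis Hx0 : arr_compl A x0.
Hypothesis sf0 : sf != 0.
Hypothesis HC : forall d, Cset A x0 d -> lin_eval f d = 0.

Definition good (p : V) := forall d : V,
  (forall h, h \in A -> aff_eval h p = 0 -> lin_eval h d = 0) -> lin_eval f d = 0.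
Definition phi (x : V) := sf * aff_eval f x.
Definition zc (y : V) := count (fun h => aff_eval h y == 0) A.

Lemma walk_step y : Kset A x0 y -> ~ good y ->
  exists y', [/\ Kset A x0 y', phi y <= phi y' & (zc y < zc y')%N].
Proof.
move=> Ky ng.
have [d [Hd nd]] : exists d, (forall h, h \in A -> aff_eval h y = 0 -> lin_eval h d = 0)
    /\ sf * lin_eval f d != 0.
  apply: contrapT => HH; apply: ng => d Hd.
  case: (eqVneq (sf * lin_eval f d) 0) => [|nd]; last by exfalso; apply: HH; exists d.
  by move/eqP; rewrite mulf_eq0 (negbTE sf0) => /eqP.
pose e := Num.sg (sf * lin_eval f d) *: d.
have He h : h \in A -> aff_eval h y = 0 -> lin_eval h e = 0.
  by move=> hA hy; rewrite lin_evalZ (Hd h) // mulr0.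
have pe : 0 < sf * lin_eval f e.
  by rewrite lin_evalZ mulrCA -normrEsg normr_gt0.
pose T := [seq h <- A | sgA x0 h * lin_eval h e < 0].
have Tn : T != [::].
  apply/eqP => T0.
  have Ce : Cset A x0 e.
    move=> h hA; rewrite leNgt; apply/negP => hl.
    have : h \in T by rewrite mem_filter hl hA.
    by rewrite T0.
  by move: pe; rewrite (HC Ce) mulr0 ltxx.
pose r h := (sgA x0 h * aff_eval h y) / (- (sgA x0 h * lin_eval h e)).
have [hs hsT Hmin] := argmin_seq r Tn.
move: (hsT); rewrite mem_filter => /andP [hsneg hsA].
pose s := r hs.
have s0 : 0 <= s by rewrite /s /r divr_ge0 // ?Ky // oppr_ge0 ltW.
exists (y + s *: e); split.
- move=> h hA; rewrite aff_evalD lin_evalZ mulrDr mulrCA.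
  case: (ltP (sgA x0 h * lin_eval h e) 0) => hl.
  + have hT : h \in T by rewrite mem_filter hl hA.
    have := Hmin h hT; rewrite -/s /r ler_pdivlMr ?oppr_gt0 // => hs'.
    have : 0 <= sgA x0 h * aff_eval h y - s * - (sgA x0 h * lin_eval h e).
      by rewrite subr_ge0.
    by rewrite mulrN opprK.
  + by rewrite addr_ge0 ?Ky // mulr_ge0.
- rewrite /phi aff_evalD lin_evalZ -subr_ge0 -mulrBr addrAC subrr add0r mulrCA.
  by rewrite mulr_ge0 // ltW.
- rewrite /zc; apply: count_lt.
  + by move=> h hA /eqP hy; apply/eqP; rewrite aff_evalD lin_evalZ He // hy mulr0 addr0.
  + exists hs => //; apply/andP; split.
    * have : sgA x0 hs * aff_eval hs (y + s *: e) = 0.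
        rewrite aff_evalD lin_evalZ mulrDr mulrCA /s /r.
        rewrite invrN mulrN mulNr -mulrA mulVf ?mulr1 ?subrr //.
        by rewrite lt_eqF.
      move/eqP; rewrite mulf_eq0 (negbTE (sig_neq0 Hx0 hsA)) /=.
      done.
    * apply/negP => /eqP hy; move: hsneg; by rewrite He // mulr0 ltxx.
Qed.

Lemma walk N : forall y, Kset A x0 y -> (size A - zc y <= N)%N ->
  exists p, [/\ Kset A x0 p, good p & phi y <= phi p].
Proof.
elim: N => [|N IH] y Ky hN; (case: (pselect (good y)) => gy; first by exists y);
  have [y' [Ky' le lt]] := walk_step Ky gy.
- have : (zc y' <= size A)%N by apply: count_size.
  lia.
- have [p [Kp gp le']] := IH y' Ky' (ltac:(lia)).
  by exists p; split => //; apply: le_trans le le'.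
Qed.

Definition Zs (y : V) := [seq aff_eval h y == 0 | h <- A].

Lemma good_eq p q : good p -> good q -> Zs p = Zs q -> aff_eval f p = aff_eval f q.
Proof.
move=> gp _ hZ.
have : lin_eval f (q - p) = 0.
  apply: gp => h hA hp; rewrite -aff_evalB hp subr0.
  move/eq_in_map: hZ => /(_ h hA) /=; rewrite hp eqxx => /esym/eqP.
  done.
by rewrite -aff_evalB => /eqP; rewrite subr_eq0 => /eqP.
Qed.

Fixpoint allbits m : seq (seq bool) :=
  if m is m'.+1 then [seq true :: b | b <- allbits m'] ++ [seq false :: b | b <- allbits m']
  else [:: [::]].

Lemma mem_allbits b : b \in allbits (size b).
Proof.
elim: b => [|c b IH] /=; first by rewrite mem_seq1.
rewrite mem_cat; case: c; first by rewrite map_f.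
by rewrite map_f ?orbT.
Qed.

Lemma fin_max (L : seq (seq bool)) : (exists p, [/\ Kset A x0 p, good p & Zs p \in L]) ->
  exists p, [/\ Kset A x0 p, good p, Zs p \in L &
    forall q, Kset A x0 q -> good q -> Zs q \in L -> phi q <= phi p].
Proof.
elim: L => [[p [_ _]]//|b L IH] hex.
have eqb q pb : good q -> good pb -> Zs q = b -> Zs pb = b -> phi q = phi pb.
  move=> gq gb Zq Zb; rewrite /phi (good_eq gq gb) //; by rewrite Zq Zb.
case: (pselect (exists p, [/\ Kset A x0 p, good p & Zs p = b])) => [[pb [Kb gb Zb]]|nb];
case: (pselect (exists p, [/\ Kset A x0 p, good p & Zs p \in L])) => [hL|nL].
- have [pL [KL gL ZL HL]] := IH hL.
  case: (leP (phi pb) (phi pL)) => hle.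
  + exists pL; split => //; first by rewrite in_cons ZL orbT.
    move=> q Kq gq; rewrite in_cons => /orP [/eqP Zq|Zq]; last exact: HL.
    by rewrite (eqb q pb).
  + exists pb; split => //; first by rewrite in_cons Zb eqxx.
    move=> q Kq gq; rewrite in_cons => /orP [/eqP Zq|Zq].
      by rewrite (eqb q pb).
    exact: le_trans (HL q Kq gq Zq) (ltW hle).
- exists pb; split => //; first by rewrite in_cons Zb eqxx.
  move=> q Kq gq; rewrite in_cons => /orP [/eqP Zq|Zq].
    by rewrite (eqb q pb).
  by exfalso; apply: nL; exists q.
- have [pL [KL gL ZL HL]] := IH hL.
  exists pL; split => //; first by rewrite in_cons ZL orbT.
  move=> q Kq gq; rewrite in_cons => /orP [/eqP Zq|Zq]; last exact: HL.
  by exfalso; apply: nb; exists q.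
- exfalso; case: hex => p [Kp gp]; rewrite in_cons => /orP [/eqP Zp|Zp].
    by apply: nb; exists p.
  by apply: nL; exists p.
Qed.

Lemma glob_max : exists p, [/\ Kset A x0 p, good p & forall y, Kset A x0 y -> phi y <= phi p].
Proof.
have Kx0 : Kset A x0 x0 by move=> h hA; exact: ltW (sig_x0 Hx0 hA).
have [p0 [K0 g0 _]] := walk Kx0 (leq_subr (zc x0) (size A)).
have mem q : Zs q \in allbits (size A).
  by have := mem_allbits (Zs q); rewrite size_map.
have [p [Kp gp _ Hp]] := @fin_max (allbits (size A)) (ex_intro _ p0 (And3 K0 g0 (mem p0))).
exists p; split => // y Ky.
have [q [Kq gq le]] := walk Ky (leq_subr (zc y) (size A)).
exact: le_trans le (Hp q Kq gq (mem q)).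
Qed.

End Walk.


Section LinAlg.
Variables (R : realType) (n : nat).
Local Notation V := 'rV[R]_n.

Lemma free_size (s : seq V) : free s -> (size s <= n)%N.
Proof.
move=> /eqP <-; have := dimvS (subvf (span s)).
rewrite dimvf dim_matrix => h; lia.
Qed.

Lemma ldim_ge (S : set V) (s : seq V) : free s -> (forall v, v \in s -> S v) ->
  (size s <= ldim S)%N.
Proof.
move=> fs Ss; rewrite /ldim.
have lt : (size s < n.+1)%N by rewrite ltnS free_size.
apply: (@leq_bigmax_cond _ _ (fun k : 'I_n.+1 => nat_of_ord k) (Ordinal lt)).
by apply/asboolP; exists s; split.
Qed.

Lemma ldim_wit (S : set V) : exists s : seq V,
  [/\ size s = ldim S, free s & forall v, v \in s -> S v].
Proof.
pose P := fun k : 'I_n.+1 => `[< exists s : seq V,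
        [/\ size s = k, (forall v, v \in s -> S v) & free s] >].
have P0 : P ord0 by apply/asboolP; exists [::]; split => //; exact: nil_free.
have cP : (0 < #|P|)%N by apply/card_gt0P; exists ord0.
have [i0 Pi0 Hi0] := eq_bigmax_cond (fun k : 'I_n.+1 => nat_of_ord k) cP.
have -> : ldim S = i0 by rewrite /ldim -Hi0.
by move: Pi0 => /asboolP [s [s1 s2 s3]]; exists s.
Qed.

Lemma lin_span0 (f : aff R n) (s : seq V) :
  (forall u, u \in s -> lin_eval f u = 0) -> forall v, v \in span s -> lin_eval f v = 0.
Proof.
move=> H v /(@coord_span _ _ _ (in_tuple s)) ->.
rewrite lin_eval_sum big1 // => i _; rewrite lin_evalZ H ?mulr0 //.
by rewrite mem_nth.
Qed.

Lemma free_shift (w : V) (K : R) (s : seq V) :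
  free (w :: s) -> free (w :: map (fun u => K *: w + u) s).
Proof.
rewrite /free /= size_map.
suff -> : span (w :: map (fun u => K *: w + u) s) = span (w :: s) by [].
apply/eqP; rewrite eqEsubv; apply/andP; split; apply/span_subvP => x.
- rewrite in_cons => /orP [/eqP ->|]; first by apply: memv_span; rewrite mem_head.
  move/mapP => [u us ->]; apply: rpredD; first by apply: rpredZ; apply: memv_span; rewrite mem_head.
  by apply: memv_span; rewrite in_cons us orbT.
- rewrite in_cons => /orP [/eqP ->|xs]; first by apply: memv_span; rewrite mem_head.
  have -> : x = (K *: w + x) - K *: w by rewrite addrC addKr.
  apply: rpredB.
    by apply: memv_span; rewrite in_cons; apply/orP; right; apply/mapP; exists x.
  by apply: rpredZ; apply: memv_span; exact: mem_head.
Qed.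

End LinAlg.

Lemma sg_dom (R : realType) (b c : R) : `|b| < `|c| -> Num.sg (c + b) = Num.sg c.
Proof.
move=> h.
have h1 : b <= `|b| := ler_norm b.
have h2 : - b <= `|b| by rewrite -normrN ler_norm.
case: (ltrgtP c 0) => hc.
- rewrite (ltr0_norm hc) in h; have hcb : c + b < 0 by lra.
  by rewrite (ltr0_sg hc) (ltr0_sg hcb).
- rewrite (gtr0_norm hc) in h; have hcb : 0 < c + b by lra.
  by rewrite (gtr0_sg hc) (gtr0_sg hcb).
- by move: h; rewrite hc normr0 ltNge normr_ge0.
Qed.

Lemma sum_term (R : realType) (T : eqType) (r : seq T) (F : T -> R) x :
  x \in r -> (forall y, 0 <= F y) -> F x <= \sum_(y <- r) F y.
Proof.
elim: r => // y r IH; rewrite in_cons big_cons => /orP [/eqP ->|xr] H.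
- by rewrite lerDl sumr_ge0.
- by rewrite (le_trans (IH xr H)) // lerDr.
Qed.

Section Max.
Variables (R : realType) (n : nat).
Local Notation V := 'rV[R]_n.
Variables (A : seq (aff R n)) (x0 : V) (Delta : set V) (f : aff R n).
Hypothesis Hx0 : arr_compl A x0.
Hypothesis HD : Delta = connected_component (arr_compl A) x0.

Lemma lsv_zero (F : set V) v0 w h :
  F = [set w | w != 0 /\ (lsignvec A w = lsignvec A v0 \/ lsignvec A w = lsignvec A (- v0))] ->
  F w -> h \in A -> lin_eval h v0 = 0 -> lin_eval h w = 0.
Proof.
by move=> -> [_ [e|e]] hA h0; move/eq_in_map: e => /(_ h hA) /=;
  rewrite ?lin_evalN h0 ?oppr0 sgr0 => /eqP; rewrite sgr_eq0 => /eqP.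
Qed.

Lemma C_sg (u w : V) : Cset A x0 w ->
  (forall h, h \in A -> Num.sg (lin_eval h u) = Num.sg (lin_eval h w)) -> Cset A x0 u.
Proof. by move=> Cw e h hA; have := Cw h hA; rewrite -sgr_ge0 sgrM -(e h hA) -sgrM sgr_ge0. Qed.

Lemma C_add (u w : V) : Cset A x0 u -> Cset A x0 w -> Cset A x0 (u + w).
Proof. by move=> Cu Cw h hA; rewrite lin_evalD mulrDr addr_ge0 // ?Cu ?Cw. Qed.

Lemma tr_max F : is_tr A Delta F -> (forall w, F w -> lin_eval f w = 0) ->
  forall d, Cset A x0 d -> lin_eval f d = 0.
Proof.
case=> [[v0 v0n0 FE] FI Fmax] Hf d Cd.
apply/eqP; apply: contraT => nd.
have Fv0 : F v0 by rewrite FE; split => //; left.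
have zF := lsv_zero FE.
have [v [Cv Fv vv0]] : exists v, [/\ Cset A x0 v, F v &
    forall h, h \in A -> lin_eval h v = 0 -> lin_eval h v0 = 0].
  case: (inf_C Hx0 HD (FI _ Fv0)) => Cv; [exists v0 | exists (- v0)]; split => //.
    by rewrite FE; split; [rewrite oppr_eq0 | right].
  by move=> h hA; rewrite lin_evalN => /eqP; rewrite oppr_eq0 => /eqP.
pose w := v + d.
have Cw : Cset A x0 w := C_add Cv Cd.
have wz h : h \in A -> lin_eval h w = 0 -> lin_eval h v0 = 0.
  move=> hA hw; apply: vv0 => //.
  have h1 := Cv h hA; have h2 := Cd h hA.
  have hs : sgA x0 h * lin_eval h v + sgA x0 h * lin_eval h d = 0.
    by rewrite -mulrDr -lin_evalD -/w hw mulr0.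
  have : sgA x0 h * lin_eval h v = 0 by lra.
  by move/eqP; rewrite mulf_eq0 (negbTE (sig_neq0 Hx0 hA)) /= => /eqP.
have fw : lin_eval f w = lin_eval f d by rewrite /w lin_evalD Hf // add0r.
have wn0 : w != 0.
  by apply/eqP => w0; move: nd; rewrite -fw w0 lin_eval0 eqxx.
pose F' := [set u : V | u != 0 /\
   (lsignvec A u = lsignvec A w \/ lsignvec A u = lsignvec A (- w))].
have fF' : face_inf A F' by exists w.
have F'I : F' `<=` inf_closure Delta.
  move=> u [un0 [e|e]]; move/eq_in_map: e => e.
  - have Cu : Cset A x0 u by apply: (C_sg Cw) => h hA; exact: e h hA.
    exact: (C_inf Hx0 HD Cu un0).1.
  - have Cu : Cset A x0 (- u).
      apply: (C_sg Cw) => h hA; rewrite lin_evalN sgrN (e h hA) /= lin_evalN sgrN opprK //.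
    by have := (C_inf Hx0 HD Cu (ltac:(by rewrite oppr_eq0))).2; rewrite opprK.
have hmax := Fmax F' fF' F'I; rewrite /pdim in hmax.
have l1 : (1 <= ldim F)%N.
  have := @ldim_ge _ _ F [:: v0]; rewrite seq1_free v0n0 => /(_ isT) H; apply: H => u.
  by rewrite mem_seq1 => /eqP ->.
have [s [ss fs sF]] := ldim_wit F.
pose K := 1 + \sum_(h <- A) \sum_(u <- s) `|lin_eval h u| / `|lin_eval h w|.
have K1 : 1 <= K.
  by rewrite lerDl; apply: sumr_ge0 => h _; apply: sumr_ge0 => u _; rewrite divr_ge0.
have K0 : 0 < K by apply: lt_le_trans K1.
pose s' := w :: map (fun u => K *: w + u) s.
have fs' : free s'.
  apply: free_shift; rewrite free_cons fs andbT.
  apply/negP => ws; move: nd; rewrite -fw.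
  by rewrite (lin_span0 (f := f) (s := s)) ?eqxx // => u us; apply: Hf; apply: sF.
have s'F' : forall x, x \in s' -> F' x.
  move=> x; rewrite in_cons => /orP [/eqP ->|/mapP [u us ->]].
    by split => //; left.
  have Fu := sF u us.
  split.
  - apply/eqP => e0.
    have : lin_eval f (K *: w + u) = K * lin_eval f w.
      by rewrite lin_evalD lin_evalZ (Hf u Fu) addr0.
    rewrite e0 lin_eval0 => /esym/eqP; rewrite mulf_eq0 => /orP [/eqP k0|].
      by move: K0; rewrite k0 ltxx.
    by rewrite fw (negbTE nd).
  - left; apply/eq_in_map => h hA /=.
    rewrite lin_evalD lin_evalZ.
    case: (eqVneq (lin_eval h w) 0) => hw.
      by rewrite hw mulr0 add0r (zF u h Fu hA (wz h hA hw)).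
    suff hlt : `|lin_eval h u| < `|K * lin_eval h w|.
      by rewrite (sg_dom hlt) sgrM (gtr0_sg K0) mul1r.
    rewrite normrM (gtr0_norm K0).
    have aw : 0 < `|lin_eval h w| by rewrite normr_gt0.
    have tb1 : `|lin_eval h u| / `|lin_eval h w| <=
        \sum_(u' <- s) `|lin_eval h u'| / `|lin_eval h w|.
      by apply: (sum_term (F := fun u' => `|lin_eval h u'| / `|lin_eval h w|)) => // y;
        rewrite divr_ge0.
    have tb2 : \sum_(u' <- s) `|lin_eval h u'| / `|lin_eval h w| <=
        \sum_(h' <- A) \sum_(u' <- s) `|lin_eval h' u'| / `|lin_eval h' w|.
      apply: (sum_term (F := fun h' => \sum_(u' <- s) `|lin_eval h' u'| / `|lin_eval h' w|)) => // y.
      by apply: sumr_ge0 => u' _; rewrite divr_ge0.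
    have tb : `|lin_eval h u| / `|lin_eval h w| <= K - 1.
      by rewrite /K addrC addKr; exact: le_trans tb1 tb2.
    rewrite ler_pdivrMr // in tb.
    apply: (le_lt_trans tb); rewrite ltr_pM2r //; lra.
have := ldim_ge fs' s'F'.
rewrite /= size_map ss => hge.
have : False by lia.
done.
Qed.

End Max.


Section TrH.
Variables (R : realType) (n : nat).
Local Notation V := 'rV[R]_n.

Lemma trH_lin (f : aff R n) v : trH f v -> v != 0 /\ lin_eval f v = 0.
Proof.
case=> vn0 [x [c [Zx c0 cv]]]; split => //.
have h1 : (fun k => lin_eval f (c k *: x k)) @ \oo --> lin_eval f v.
  exact: (cvg_comp _ _ cv (@lin_eval_cont _ _ f v)).
have e : (fun k => lin_eval f (c k *: x k)) = (fun k => - (c k * f.2)).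
  apply: funext => k; rewrite lin_evalZ.
  have : aff_eval f (x k) = 0 := Zx k.
  by move/eqP; rewrite /aff_eval addr_eq0 => /eqP ->; rewrite mulrN.
have h2 : (fun k => - (c k * f.2)) @ \oo --> (0 : R).
  rewrite -oppr0 -(mul0r f.2); apply: cvgN; exact: cvgMr_tmp.
rewrite e in h1; exact: (cvg_unique (@Rhausdorff R) h1 h2).
Qed.

Lemma seq_lim (p v : V) (e : R) :
  (fun k => (e * (k.+1%:R)^-1) *: (p + k.+1%:R *: v)) @ \oo --> e *: v.
Proof.
have -> : (fun k => (e * (k.+1%:R)^-1) *: (p + k.+1%:R *: v)) =
    (fun k => (e * harmonic k) *: p + e *: v).
  apply: funext => k; rewrite scalerDr scalerA -mulrA mulVf ?mulr1 ?pnatr_eq0 //.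
rewrite -[X in _ --> X]add0r; apply: cvgD; last exact: cvg_cst.
rewrite -(scale0r p); apply: cvgZr_tmp.
rewrite -(mulr0 e); apply: cvgMl_tmp; exact: cvg_harmonic.
Qed.

Lemma seq_c0 (e : R) : (fun k => e * (k.+1%:R)^-1) @ \oo --> (0 : R).
Proof. rewrite -(mulr0 e); apply: cvgMl_tmp; exact: cvg_harmonic. Qed.

Lemma trH_of (f : aff R n) v : nonconstant f -> v != 0 -> lin_eval f v = 0 -> trH f v.
Proof.
move=> nf vn0 fv.
have nz : lin_eval f f.1 != 0.
  apply: contra nf => /eqP H; apply/eqP/rowP => i; rewrite mxE.
  have : \sum_(j < n) f.1 0 j ^+ 2 = lin_eval f f.1 by apply: eq_bigr => j _; rewrite expr2.
  rewrite H => /eqP; rewrite psumr_eq0 => [/allP /(_ i) /= |j _]; last exact: sqr_ge0.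
  by rewrite mem_index_enum => /(_ isT); rewrite sqrf_eq0 => /eqP.
pose p := (- f.2 / lin_eval f f.1) *: f.1.
have fp : aff_eval f p = 0.
  by rewrite /aff_eval /p lin_evalZ mulrAC -mulrA divff ?mulr1 // addrC subrr.
split => //.
exists (fun k => p + k.+1%:R *: v), (fun k => 1 * (k.+1%:R)^-1); split.
- by move=> k; rewrite /zeroset /= aff_evalD lin_evalZ fv mulr0 addr0.
- exact: seq_c0.
- by rewrite -[X in _ --> X]scale1r; exact: seq_lim.
Qed.

End TrH.

Section Main1.
Variables (R : realType) (n : nat).
Local Notation V := 'rV[R]_n.
Variables (A : seq (aff R n)) (x0 : V) (Delta : set V).
Hypothesis Hx0 : arr_compl A x0.
Hypothesis HD : Delta = connected_component (arr_compl A) x0.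

Lemma grow_pos (f0 : aff R n) : growing f0 Delta ->
  forall v, Cset A x0 v -> v != 0 -> 0 < lin_eval f0 v.
Proof.
move=> [_ G2] v Cv vn0; rewrite ltNge; apply/negP => hl.
have [r Hr] := G2 (aff_eval f0 x0 + 1).
pose k := (`|r| + `|x0|) / `|v|.
have v0 : 0 < `|v| by rewrite normr_gt0.
have k0 : 0 <= k by rewrite divr_ge0 // addr_ge0.
have Dk := ray Hx0 HD Cv k0.
have : r <= `|x0 + k *: v|.
  have t : `|k *: v| <= `|x0 + k *: v| + `|x0|.
    have e : k *: v = (x0 + k *: v) - x0 by rewrite addrC addKr.
    rewrite {1}e; exact: ler_normB.
  rewrite normrZ (ger0_norm k0) /k divfK ?gt_eqF // in t.
  have := ler_norm r; lra.
move/(Hr _ Dk); rewrite aff_evalD lin_evalZ.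
have : k * lin_eval f0 v <= 0 by rewrite mulr_ge0_le0.
lra.
Qed.

Lemma bnd_C (f : aff R n) : f_bounded_on f Delta ->
  forall v, Cset A x0 v -> lin_eval f v = 0.
Proof.
case=> M HM v Cv; apply/eqP; apply: contraT => na.
have a0 : 0 < `|lin_eval f v| by rewrite normr_gt0.
have M0 : `|aff_eval f x0| <= M := HM _ (x0D Hx0 HD).
pose k := (M + `|aff_eval f x0| + 1) / `|lin_eval f v|.
have n0 : 0 <= `|aff_eval f x0| := normr_ge0 _.
have k0 : 0 <= k by rewrite divr_ge0 //; lra.
have := HM _ (ray Hx0 HD Cv k0); rewrite aff_evalD lin_evalZ.
have t : `|k * lin_eval f v| <= `|aff_eval f x0 + k * lin_eval f v| + `|aff_eval f x0|.
  have e : k * lin_eval f v = (aff_eval f x0 + k * lin_eval f v) - aff_eval f x0.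
    by rewrite addrC addKr.
  rewrite {1}e; exact: ler_normB.
rewrite normrM (ger0_norm k0) /k divfK ?gt_eqF // in t.
lra.
Qed.

Lemma f_nz (f : aff R n) : hyperplane_of A f -> forall x, Delta x -> aff_eval f x != 0.
Proof.
case=> _ [h [hA zeq]] x Dx; apply/eqP => fx.
have : zeroset h x by rewrite -zeq.
by move: (D_compl HD Dx hA) => /eqP.
Qed.

Lemma sf_prop (f : aff R n) : hyperplane_of A f ->
  let sf := Num.sg (aff_eval f x0) in
  [/\ sf != 0, `|sf| = 1 & forall x, Delta x -> 0 < sf * aff_eval f x].
Proof.
move=> Hf sf.
have nz := f_nz Hf (x0D Hx0 HD).
split.
- by rewrite /sf sgr_eq0.
- by rewrite /sf normr_sg nz.
- apply: (D_sign Hx0 HD) => //; first exact: aff_eval_cont.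
  exact: f_nz.
Qed.

Lemma HC_bnd (f : aff R n) : hyperplane_of A f ->
  (forall v, Cset A x0 v -> lin_eval f v = 0) -> f_bounded_on f Delta.
Proof.
move=> Hf HC.
have [sf0 sf1 sfpos] := sf_prop Hf.
have [p [Kp gp Hp]] := glob_max Hx0 sf0 HC.
exists (phi f (Num.sg (aff_eval f x0)) p) => x Dx.
have Kx : Kset A x0 x by move=> h hA; apply: ltW; apply: (DS Hx0 HD Dx).
apply: le_trans (Hp x Kx); rewrite /phi.
by rewrite -[X in X <= _]mul1r -sf1 -normrM ger0_norm // ltW // sfpos.
Qed.

End Main1.


Section Analytic.
Variables (R : realType) (n : nat).
Local Notation V := 'rV[R]_n.

Lemma sin_between (a b : R) : sin a = 0 -> a < b -> exists c, a < c < b /\ sin c != 0.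
Proof.
move=> sa ab.
pose u := Num.min ((b - a) / 2) (pi / 2).
have pi0 := pi_gt0 R.
have u0 : 0 < u by rewrite /u lt_min !divr_gt0 // subr_gt0.
have u1 : u <= (b - a) / 2 by rewrite /u ge_min lexx.
have u2 : u <= pi / 2 by rewrite /u ge_min lexx orbT.
exists (a + u); split.
  apply/andP; split; first by rewrite ltrDl.
  have : (b - a) / 2 < b - a by rewrite ltr_pdivrMr // ltr_pMr ?subr_gt0 // ltr1n.
  lra.
rewrite sinD sa mul0r add0r mulf_neq0 //.
  have := cos2Dsin2 a; rewrite sa expr0n /= addr0 => /eqP; rewrite sqrf_eq1.
  by case/orP => /eqP ->; rewrite ?oppr_eq0 oner_eq0.
apply: lt0r_neq0; apply: sin_gt0_pi; rewrite u0 /=; lra.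
Qed.

Lemma sin_const (T : topologicalType) (D : set T) (phi : T -> R) a :
  connected D -> {within D, continuous phi} -> D a ->
  (forall x, D x -> sin (phi x) = 0) -> forall x, D x -> phi x = phi a.
Proof.
move=> cD cphi Da hs x Dx; apply: contrapT => ne.
case: (ltgtP (phi a) (phi x)) => hl; last by apply: ne.
- have [c [/andP [c1 c2] sc]] := sin_between (hs a Da) hl.
  have [w Dw hw] := conn_ivt (z := c) cD cphi Da Dx (ltac:(by rewrite !ltW)).
  by move: sc; rewrite -hw hs // eqxx.
- have [c [/andP [c1 c2] sc]] := sin_between (hs x Dx) hl.
  have [w Dw hw] := conn_ivt (z := c) cD cphi Dx Da (ltac:(by rewrite !ltW)).
  by move: sc; rewrite -hw hs // eqxx.
Qed.

Local Open Scope complex_scope.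

Lemma cexp_Re (z : R[i]) : complex.Re (cexp z) = expR (complex.Re z) * cos (complex.Im z).
Proof. by []. Qed.
Lemma cexp_Im (z : R[i]) : complex.Im (cexp z) = expR (complex.Re z) * sin (complex.Im z).
Proof. by []. Qed.

Lemma branch_form (f : aff R n) (alpha : R[i]) (D : set V) (g : V -> R[i]) x0 :
  connected D -> D x0 -> (forall x, D x -> aff_eval f x != 0) ->
  branch f alpha D g ->
  exists th : R, forall x, D x ->
    g x = cexp (alpha * ((ln `|aff_eval f x|) +i* th)).
Proof.
move=> cD Dx0 nz [L [cRe cIm HL Hg]].
have sI x : D x -> sin (complex.Im (L x)) = 0.
  move=> Dx; have := congr1 (@complex.Im R) (HL x Dx); rewrite cexp_Im /=.
  move/eqP; rewrite mulf_eq0 gt_eqF ?expR_gt0 //= => /eqP.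
  done.
exists (complex.Im (L x0)) => x Dx.
have eI := sin_const cD cIm Dx0 sI Dx.
have eR : expR (complex.Re (L x)) * cos (complex.Im (L x)) = aff_eval f x.
  by have := congr1 (@complex.Re R) (HL x Dx); rewrite cexp_Re.
have c1 : `|cos (complex.Im (L x))| = 1.
  have := cos2Dsin2 (complex.Im (L x)); rewrite sI // expr0n /= addr0 => /eqP.
  by rewrite sqrf_eq1 => /orP [] /eqP ->; rewrite ?normrN normr1.
have eRe : complex.Re (L x) = ln `|aff_eval f x|.
  by rewrite -eR normrM c1 mulr1 gtr0_norm ?expR_gt0 // expRK.
rewrite Hg //; congr (cexp (alpha * _)).
by rewrite -eRe -eI; case: (L x).
Qed.

Local Close Scope complex_scope.

Lemma aff1_cont (a b : R) : continuous (fun l : R => a * l + b).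
Proof.
move=> l; apply: cvgD; last exact: cvg_cst.
by apply: cvgMl_tmp; exact: cvg_id.
Qed.

Lemma psi_cont (a b c d : R) (trig : R -> R) : continuous trig ->
  continuous (fun l : R => expR (a * l + b) * trig (c * l + d)).
Proof.
move=> ct l; apply: (continuousM (s := fun l => expR (a * l + b)) (t := fun l => trig (c * l + d))).
  apply: (@continuous_comp R R R (fun l => a * l + b) expR l).
    exact: aff1_cont.
  exact: continuous_expR.
apply: (@continuous_comp R R R (fun l => c * l + d) trig l).
  exact: aff1_cont.
exact: ct.
Qed.

End Analytic.


Lemma ext_exists (R : realType) (n : nat) (A' : seq (aff R n)) (f : aff R n)
  (D : set 'rV[R]_n) (F0 : set 'rV[R]_n) :
  face A' F0 -> F0 `<=` Defs.maxset f D -> exists F, ext_supp A' f D F.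
Proof.
move=> fF0 sF0.
pose P := fun k => `[< exists F, [/\ face A' F, F `<=` Defs.maxset f D & adim F = k] >].
have ex : exists k, P k by exists (adim F0); apply/asboolP; exists F0.
have ub : forall k, P k -> (k <= n)%N.
  move=> k /asboolP [F' [_ _ <-]]; rewrite /adim /ldim; apply/bigmax_leqP => i _.
  by rewrite -ltnS; exact: ltn_ord.
case: (ex_maxnP ex ub) => m /asboolP [F [fF sF aF]] Hm.
exists F; split => // F' fF' sF'; rewrite aF; apply: Hm; apply/asboolP; by exists F'.
Qed.

Local Open Scope complex_scope.
Lemma Re_G (R : realType) (alpha : R[i]) (l th : R) :
  complex.Re (cexp (alpha * (l +i* th))) =
  expR (complex.Re alpha * l + - (complex.Im alpha * th)) *
  cos (complex.Im alpha * l + complex.Re alpha * th).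
Proof. by case: alpha => ar ai; rewrite cexp_Re /= [ai * l + _]addrC. Qed.
Lemma Im_G (R : realType) (alpha : R[i]) (l th : R) :
  complex.Im (cexp (alpha * (l +i* th))) =
  expR (complex.Re alpha * l + - (complex.Im alpha * th)) *
  sin (complex.Im alpha * l + complex.Re alpha * th).
Proof. by case: alpha => ar ai; rewrite cexp_Im /= [ai * l + _]addrC. Qed.
Local Close Scope complex_scope.

Unset Implicit Arguments. Set Strict Implicit. Set Printing Implicit Defensive.

Theorem lemma8 (R : realType) (n : nat) (A : seq (aff R n)) (f0 f : aff R n)
    (alpha : R[i]) (Delta : set 'rV[R]_n) (g : 'rV[R]_n -> R[i]) :
  arrangement A -> essential A -> nonconstant f0 ->
  hyperplane_of A f ->
  is_domain A Delta -> growing f0 Delta ->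
  branch f alpha Delta g ->
  forall F : set 'rV[R]_n, is_tr A Delta F ->
  [/\ f_bounded_on f Delta <-> F `<=` trH f,
      F `<=` trH f <-> h_vanishes_on f f0 F &
      f_bounded_on f Delta ->
        exists T : R, forall t : R, T <= t ->
          exists c : R[i],
            ext_value (arr_t A f0 t) f g (Delta `&` [set x | aff_eval f0 x < t]) c /\
            ext_value A f g Delta c].
Proof.
move=> Harr Hess Hf0 Hhyp [x0 Hx0 HD] Hgrow Hbr F Htr.
have HCiff : f_bounded_on f Delta <-> (forall v, Cset A x0 v -> lin_eval f v = 0).
  split; first by move=> Hb v Cv; exact: (bnd_C Hx0 HD Hb Cv).
  exact: (HC_bnd Hx0 HD Hhyp).
have FI : F `<=` inf_closure Delta by case: Htr.
have fnc : nonconstant f by case: Hhyp.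
have Fprop v : F v -> [/\ v != 0, lin_eval f0 v != 0 &
    forall h, (forall d, Cset A x0 d -> lin_eval h d = 0) -> lin_eval h v = 0].
  move=> Fv; have Iv := FI v Fv; have vn0 : v != 0 by case: Iv.
  split => //.
  - case: (inf_C Hx0 HD Iv) => Cv.
      by rewrite gt_eqF // (grow_pos Hx0 HD Hgrow Cv vn0).
    have := grow_pos Hx0 HD Hgrow Cv (ltac:(by rewrite oppr_eq0)).
    by rewrite lin_evalN oppr_gt0 => /lt_eqF ->.
  - move=> h HC; case: (inf_C Hx0 HD Iv) => Cv; first exact: HC.
    by apply/eqP; rewrite -oppr_eq0 -lin_evalN HC.
have part1 : f_bounded_on f Delta <-> F `<=` trH f.
  split.
  - move/HCiff => HC v Fv; have [vn0 _ H] := Fprop v Fv.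
    exact: trH_of fnc vn0 (H f HC).
  - move=> FT; apply/HCiff; apply: (tr_max Hx0 HD Htr) => w Fw.
    exact: (trH_lin (FT w Fw)).2.
have part2 : F `<=` trH f <-> h_vanishes_on f f0 F.
  split.
  - move=> FT v Fv; have [vn0 f0n _] := Fprop v Fv; split.
    + by move/trH_lin => [_ /eqP]; rewrite (negbTE f0n).
    + by rewrite /hfun (trH_lin (FT v Fv)).2 mul0r.
  - move=> Hv v Fv; have [vn0 f0n _] := Fprop v Fv; have [_ hz] := Hv v Fv.
    apply: trH_of => //.
    by move: hz; rewrite /hfun => /eqP; rewrite mulf_eq0 invr_eq0 (negbTE f0n) orbF => /eqP.
split => //.
move=> Hb.
have HC : forall v, Cset A x0 v -> lin_eval f v = 0 by move=> v Cv; exact: (bnd_C Hx0 HD Hb Cv).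
have [sf0 sf1 sfpos] := sf_prop Hx0 HD Hhyp.
set sf := Num.sg (aff_eval f x0) in sf0 sf1 sfpos.
have [p [Kp gp Hp]] := glob_max Hx0 sf0 HC.
pose M := phi f sf p.
have phiabs y : closure Delta y -> `|aff_eval f y| = phi f sf y.
  move=> cy.
  have h0 : 0 <= sf * aff_eval f y.
    exact: (closure_ge0 (phi := fun x => sf * aff_eval f x)
      (contM (c := sf) (@aff_eval_cont _ _ f)) sfpos cy).
  by rewrite /phi -[LHS]mul1r -sf1 -normrM ger0_norm.
have pcl : closure Delta p := K_closure_sub Hx0 HD Kp.
have Mmax y : closure Delta y -> `|aff_eval f y| <= M.
  by move=> cy; rewrite phiabs //; apply: Hp; apply: (closure_K Hx0 HD).
have fpM : `|aff_eval f p| = M := phiabs p pcl.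
have nzD := f_nz HD Hhyp.
have Mpos : 0 < M.
  apply: lt_le_trans (Mmax x0 (subset_closure (x0D Hx0 HD))).
  by rewrite normr_gt0 nzD //; exact: (x0D Hx0 HD).
have [th Hth] := branch_form (D_conn HD) (x0D Hx0 HD) nzD Hbr.
pose G := fun x => cexp (alpha * ((ln `|aff_eval f x|) +i* th)%C).
pose c := G p.
pose ar := complex.Re alpha. pose ai := complex.Im alpha.
have conv (D : set 'rV[R]_n) q : D `<=` Delta -> `|aff_eval f q| = M ->
   ((fun x => complex.Re (g x)) @ within D (nbhs q) --> complex.Re c) /\
   ((fun x => complex.Im (g x)) @ within D (nbhs q) --> complex.Im c).
  move=> DD fq.
  have hf : (fun x => aff_eval f x) @ nbhs q --> aff_eval f q := @aff_eval_cont _ _ f q.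
  have hn : (fun x => `|aff_eval f x|) @ nbhs q --> `|aff_eval f q|.
    exact: (cvg_comp _ _ hf (@norm_continuous _ R^o (aff_eval f q))).
  have hl : (fun x => ln `|aff_eval f x|) @ nbhs q --> ln `|aff_eval f q|.
    by apply: (cvg_comp _ _ hn); apply: continuous_ln; rewrite fq.
  have cq : G q = c by rewrite /c /G fq -fpM.
  have en (proj : R[i] -> R) :
      \forall x \near within D (nbhs q), proj (G x) = proj (g x).
    have : nbhs q (fun x => D x -> proj (G x) = proj (g x)).
      by apply: (@filterE _ _ (nbhs_filter q)) => x Dx; rewrite Hth //; apply: DD.
    exact.
  split.
  - pose psi := fun l => expR (ar * l + - (ai * th)) * cos (ai * l + ar * th).
    have eG : (fun x => complex.Re (G x)) = (fun x => psi (ln `|aff_eval f x|)).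
      by apply: funext => x; rewrite /G Re_G.
    have hp : (fun x => complex.Re (G x)) @ nbhs q --> complex.Re c.
      rewrite eG -cq /G Re_G.
      exact: (cvg_comp _ _ hl (@psi_cont R ar (- (ai * th)) ai (ar * th) cos
                 (@continuous_cos R) (ln `|aff_eval f q|))).
    have hw := @cvg_within_filter _ _ _ (nbhs q) (nbhs_filter q) _ D hp.
    exact: (cvg_trans (near_eq_cvg (en (@complex.Re R))) hw).
  - pose psi := fun l => expR (ar * l + - (ai * th)) * sin (ai * l + ar * th).
    have eG : (fun x => complex.Im (G x)) = (fun x => psi (ln `|aff_eval f x|)).
      by apply: funext => x; rewrite /G Im_G.
    have hp : (fun x => complex.Im (G x)) @ nbhs q --> complex.Im c.
      rewrite eG -cq /G Im_G.
      exact: (cvg_comp _ _ hl (@psi_cont R ar (- (ai * th)) ai (ar * th) sin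
                 (@continuous_sin R) (ln `|aff_eval f q|))).
    have hw := @cvg_within_filter _ _ _ (nbhs q) (nbhs_filter q) _ D hp.
    exact: (cvg_trans (near_eq_cvg (en (@complex.Im R))) hw).
pose T := aff_eval f0 p + 1.
exists T => t tT.
have f0p : aff_eval f0 p < t by rewrite /T in tT; lra.
pose Dt := Delta `&` [set x | aff_eval f0 x < t].
have nbt y : aff_eval f0 y < t -> nbhs y [set x | aff_eval f0 x < t].
  move=> hy.
  exact: (@cvgr_lt _ _ (nbhs y) (nbhs_filter y) (aff_eval f0) _ (@aff_eval_cont _ _ f0 y) t hy).
have clt : closure Dt `<=` closure Delta by apply: closure_subset; exact: subIsetl.
have pclt : closure Dt p := K_closureP Hx0 HD Kp (nbt p f0p).
have cls y : signvec A y = signvec A p -> Kset A x0 y /\ aff_eval f y = aff_eval f p.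
  move/eq_in_map => e; split.
  - move=> h hA; have := Kp h hA.
    by rewrite -sgr_ge0 sgrM -(e h hA) -sgrM sgr_ge0.
  - have fz : lin_eval f (y - p) = 0.
      apply: gp => h hA hp0; rewrite -aff_evalB hp0 subr0; apply/eqP.
      by rewrite -sgr_eq0 (e h hA) hp0 sgr0.
    by move: fz; rewrite -aff_evalB => /eqP; rewrite subr_eq0 => /eqP.
pose Fp := [set y | signvec A y = signvec A p].
have fFp : face A Fp by exists p.
have Fpmax : Fp `<=` Defs.maxset f Delta.
  move=> y /cls [Ky fy]; have cy := K_closure_sub Hx0 HD Ky; split => // z cz.
  by rewrite fy fpM; apply: Mmax.
pose At := arr_t A f0 t.
pose Fpt := [set y | signvec At y = signvec At p].
have fFpt : face At Fpt by exists p.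
have ev z : aff_eval (f0.1, f0.2 - t) z = aff_eval f0 z - t by rewrite /aff_eval /= addrA.
have Fptmax : Fpt `<=` Defs.maxset f Dt.
  move=> y /eqP; rewrite /signvec /At /arr_t !map_rcons eqseq_rcons => /andP [/eqP e1 /eqP e2].
  have [Ky fy] := cls y e1.
  have f0y : aff_eval f0 y < t.
    move: e2; rewrite !ev (@ltr0_sg _ (aff_eval f0 p - t)) ?subr_lt0 // => /eqP.
    by rewrite sgr_cp0 subr_lt0.
  have cy : closure Dt y := K_closureP Hx0 HD Ky (nbt y f0y).
  split => // z cz; rewrite fy fpM; apply: Mmax; exact: clt.
exists c; split.
- split; first exact: ext_exists fFpt Fptmax.
  move=> F' [_ sF' _] q F'q.
  have [cq mq] := sF' q F'q.
  apply: conv; first exact: subIsetl.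
  apply/eqP; rewrite eq_le (Mmax q (clt q cq)) /= -fpM; exact: mq p pclt.
- split; first exact: ext_exists fFp Fpmax.
  move=> F' [_ sF' _] q F'q; have [cq mq] := sF' q F'q.
  apply: conv => //.
  apply/eqP; rewrite eq_le (Mmax q cq) /= -fpM; exact: mq p pcl.
Qed.
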